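(* Let an operational theory contain two binary-outcome measurements, a which-way measurement $Z$ and a which-phase measurement $X$, each with outcomes in $\{+1,-1\}$, and suppose the theory has $A_1^2$-symmetry relative to $Z$ and $X$. For a state $\vec{s}$, define the path distinguishability $\mathcal{P}(\vec{s}) = |\langle Z\rangle_{\vec{s}}| = |\mathbb{P}(+1|Z,\vec{s})-\mathbb{P}(-1|Z,\vec{s})|$ and the fringe visibility $\mathcal{V}(\vec{s}) = |\langle X\rangle_{\vec{s}}| = |\mathbb{P}(+1|X,\vec{s})-\mathbb{P}(-1|X,\vec{s})|$. If the operational theory admits a (generalized-)noncontextual ontological model, then every state $\vec{s}$ of the theory satisfies $$\mathcal{V}(\vec{s}) + \mathcal{P}(\vec{s}) \le 1.$$
   Context: An operational theory (for a single system, prepare-measure scenario) specifies a set of preparations $P$, measurements $M$, and probabilities $\mathbb{P}(y|M,P)$ of outcome $y$ of $M$ given $P$. In the generalized-probabilistic-theory representation each preparation is represented by a real vector $\vec{s}_P$ (its ''operational state'') and each effect $[y|M]$ by a real vector $\vec{e}_{y|M}$ with $\mathbb{P}(y|M,P)=\vec{s}_P\cdot\vec{e}_{y|M}$; two preparations are operationally equivalent iff they give identical statistics for all measurements, i.e. iff they have the same vector. The set of operational states is assumed closed under convex mixtures. For a measurement $M$ with outcomes in $\{+1,-1\}$, $\langle M\rangle_{\vec{s}} = \mathbb{P}(+1|M,\vec{s})-\mathbb{P}(-1|M,\vec{s})$, and $|\langle M\rangle_{\vec{s}}|$ is called the $M$-predictability. An ontological model assigns a (finite) set $\Lambda$, to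 each preparation $P$ a probability distribution $\mu(\lambda|P)$ on $\Lambda$, and to each measurement $M$ a conditional distribution $\xi(y|M,\lambda)$, such that $\mathbb{P}(y|M,P)=\sum_{\lambda}\xi(y|M,\lambda)\mu(\lambda|P)$. It is (generalized, preparation-)noncontextual if operationally equivalent preparations are assigned the same distribution; in particular, if $\sum_i w_i\vec{s}_i=\sum_j w'_j\vec{s}'_j$ for probability weights $w,w'$, then $\sum_i w_i\mu(\cdot|P_i)=\sum_j w'_j\mu(\cdot|P'_j)$. A state $\vec{s}_1$ satisfies the $A_1^2$-orbit-realizability condition relative to measurements $M,M'$ (outcomes $\pm1$) if there exist operational states $\vec{s}_2,\vec{s}_3,\vec{s}_4$ in the theory such that $\langle M\rangle_{\vec{s}_1}=\langle M\rangle_{\vec{s}_2}=-\langle M\rangle_{\vec{s}_3}=-\langle M\rangle_{\vec{s}_4}$, $\langle M'\rangle_{\vec{s}_1}=-\langle M'\rangle_{\vec{s}_2}=-\langle M'\rangle_{\vec{s}_3}=\langle M'\rangle_{\vec{s}_4}$, and $\tfrac12\vec{s}_1+\tfrac12\vec{s}_3=\tfrac12\vec{s}_2+\tfrac12\vec{s}_4$. The theory has $A_1^2$-symmetry relative to $M,M'$ if every operational state satisfies this condition. *)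

(* Defs.v *)
(* Operational theories in the GPT representation, over an
   arbitrary real field R, with operational states/effects in 'rV[R]_n. *)
From HB Require Import structures.
From mathcomp Require Import all_boot all_order all_algebra.
Set Implicit Arguments. Unset Strict Implicit. Unset Printing Implicit Defensive.
Import Order.TTheory GRing.Theory Num.Theory.
Local Open Scope ring_scope.

Definition dotv (R : realFieldType) (n : nat) (s e : 'rV[R]_n) : R :=
  \sum_(i < n) s ord0 i * e ord0 i.

Definition probw (R : realFieldType) (k : nat) (w : 'I_k -> R) : Prop :=
  (forall i, 0 <= w i) /\ \sum_(i < k) w i = 1.

(* P(y|M,P) = st P . eff M y. *)
Unset Implicit Arguments.
Record optheory (R : realFieldType) (n : nat) := OpTheory {
  Prep : Type;
  st : Prep -> 'rV[R]_n;
  Meas : Type;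
  Out : Meas -> finType;
  eff : forall M : Meas, Out M -> 'rV[R]_n;
  prob_ge0 : forall (P : Prep) (M : Meas) (y : Out M), 0 <= dotv (st P) (eff M y);
  prob_sum1 : forall (P : Prep) (M : Meas), \sum_(y : Out M) dotv (st P) (eff M y) = 1;
  mix_closed : forall (k : nat) (w : 'I_k -> R) (Ps : 'I_k -> Prep),
      probw w -> exists P, st P = \sum_(i < k) w i *: st (Ps i)
}.

Set Implicit Arguments.
Arguments Prep {R n}.
Arguments Meas {R n}.
Arguments Out {R n o} _.
Arguments st {R n} o _.
Arguments eff {R n o} M _.

Definition prob R n (T : optheory R n) (M : Meas T) (y : Out M) (P : Prep T) : R :=
  dotv (st T P) (eff M y).

Definition binary_meas R n (T : optheory R n) (M : Meas T) (yp ym : Out M) : Prop :=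
  yp != ym /\ forall y : Out M, y = yp \/ y = ym.

(* <M>_s for a binary measurement with outcomes yp (+1), ym (-1), on a state s *)
Definition expect R n (T : optheory R n) (M : Meas T) (yp ym : Out M)
  (s : 'rV[R]_n) : R := dotv s (eff M yp) - dotv s (eff M ym).

Definition A12_orbit R n (T : optheory R n) (M : Meas T) (mp mm : Out M)
  (M' : Meas T) (mp' mm' : Out M') (P1 : Prep T) : Prop :=
  exists P2 P3 P4 : Prep T,
    let s1 := st T P1 in let s2 := st T P2 in
    let s3 := st T P3 in let s4 := st T P4 in
    (expect mp mm s1 = expect mp mm s2 /\
     expect mp mm s2 = - expect mp mm s3 /\
     - expect mp mm s3 = - expect mp mm s4) /\
    (expect mp' mm' s1 = - expect mp' mm' s2 /\
     - expect mp' mm' s2 = - expect mp' mm' s3 /\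
     - expect mp' mm' s3 = expect mp' mm' s4) /\
    2^-1 *: s1 + 2^-1 *: s3 = 2^-1 *: s2 + 2^-1 *: s4.

Definition A12_symmetric R n (T : optheory R n) (M : Meas T) (mp mm : Out M)
  (M' : Meas T) (mp' mm' : Out M') : Prop :=
  forall P1 : Prep T, A12_orbit mp mm mp' mm' P1.

Definition ontological_model R n (T : optheory R n) (L : finType)
  (mu : Prep T -> L -> R) (xi : forall M : Meas T, Out M -> L -> R) : Prop :=
  [/\ forall (P : Prep T) (l : L), 0 <= mu P l,
      forall P, \sum_(l : L) mu P l = 1,
      forall (M : Meas T) (y : Out M) (l : L), 0 <= xi M y l,
      forall (M : Meas T) (l : L), \sum_(y : Out M) xi M y l = 1 &
      forall (M : Meas T) (y : Out M) (P : Prep T), prob y P = \sum_(l : L) xi M y l * mu P l].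

Definition prep_noncontextual R n (T : optheory R n) (L : finType)
  (mu : Prep T -> L -> R) : Prop :=
  forall (k m : nat) (w : 'I_k -> R) (Ps : 'I_k -> Prep T)
         (w' : 'I_m -> R) (Ps' : 'I_m -> Prep T),
    probw w -> probw w' ->
    \sum_(i < k) w i *: st T (Ps i) = \sum_(j < m) w' j *: st T (Ps' j) ->
    forall l, \sum_(i < k) w i * mu (Ps i) l = \sum_(j < m) w' j * mu (Ps' j) l.

Definition admits_NC_model R n (T : optheory R n) : Prop :=
  exists (L : finType) (mu : Prep T -> L -> R)
         (xi : forall M : Meas T, Out M -> L -> R),
    ontological_model mu xi /\ prep_noncontextual mu.

(* Main.v *)
Require Import Defs.
From mathcomp Require Import all_boot all_order all_algebra.
From mathcomp Require Import ring lra.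
Import Order.TTheory GRing.Theory Num.Theory.
Local Open Scope ring_scope.

Lemma key_bound (R : realFieldType) (L : finType) (e o n1 n2 p q : L -> R) :
  (forall l, 0 <= e l) -> (forall l, 0 <= o l) -> (forall l, 0 <= n1 l) ->
  (forall l, 0 <= n2 l) -> (forall l, 0 <= p l <= 1) -> (forall l, 0 <= q l <= 1) ->
  (forall l, e l + o l = n1 l + n2 l) -> \sum_l e l = 1 ->
  \sum_l p l * e l - \sum_l p l * n1 l + (\sum_l q l * e l - \sum_l q l * n2 l) <= 1.
Proof.
move=> he ho hn1 hn2 hp hq hr hs.
rewrite -!sumrB -big_split /= -hs; apply: ler_sum => l _.
have /andP[p0 p1] := hp l; have /andP[q0 q1] := hq l.
have := hr l; have := he l; have := ho l; have := hn1 l; have := hn2 l.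
move=> a b c d f.
have h1 : 0 <= (1 - p l) * (1 - q l) * e l by rewrite !mulr_ge0 // subr_ge0.
have h2 : 0 <= p l * (1 - q l) * n1 l by rewrite !mulr_ge0 // subr_ge0.
have h3 : 0 <= (1 - p l) * q l * n2 l by rewrite !mulr_ge0 // subr_ge0.
have h4 : 0 <= p l * q l * o l by rewrite !mulr_ge0.
have E : (1 - p l) * (1 - q l) * e l + p l * (1 - q l) * n1 l + (1 - p l) * q l * n2 l
   + p l * q l * (n1 l + n2 l - e l) = e l - (p l * e l - p l * n1 l + (q l * e l - q l * n2 l)).
  by ring.
move: h4; rewrite (_ : o l = n1 l + n2 l - e l); last by rewrite -f; ring.
move=> h4. rewrite -subr_ge0 -E. by rewrite !addr_ge0.
Qed.

Lemma sum2 (R : realFieldType) (Y : finType) (yp ym : Y) (F : Y -> R) :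
  yp != ym -> (forall y : Y, y = yp \/ y = ym) -> \sum_y F y = F yp + F ym.
Proof.
move=> hne hall; rewrite (bigD1 yp) //=; congr (_ + _).
rewrite (eq_bigl (pred1 ym)) ?big_pred1_eq // => y /=.
case: (hall y) => ->; rewrite ?eqxx /=; first by rewrite (negbTE hne).
by rewrite eq_sym hne.
Qed.

Theorem corollary1 (R : realFieldType) (n : nat) (T : optheory R n)
  (Z : Meas T) (zp zm : Out Z) (X : Meas T) (xp xm : Out X) :
  binary_meas zp zm -> binary_meas xp xm ->
  A12_symmetric zp zm xp xm ->
  admits_NC_model T ->
  forall P : Prep T,
    `|expect xp xm (st T P)| + `|expect zp zm (st T P)| <= 1.
Proof.
move=> [zne zall] [xne xall] hA [L [mu [xi [[mu0 mu1 xi0 xi1 hprob] hnc]]]] P.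
have [P2 [P3 [P4 [[ez1 [ez2 ez3]] [[ex1 [ex2 ex3]] hmix]]]]] := hA P.
have expE : forall (M : Meas T) (yp ym : Out M), yp != ym ->
    (forall y, y = yp \/ y = ym) -> forall S,
    expect yp ym (st T S) = 2 * \sum_l xi M yp l * mu S l - 1.
  move=> M yp ym hne hall S.
  rewrite /expect -[dotv _ (eff M yp)]/(prob yp S) -[dotv _ (eff M ym)]/(prob ym S).
  rewrite !hprob.
  have hm : forall l, xi M ym l = 1 - xi M yp l.
    by move=> l; rewrite -(xi1 M l) (sum2 _ _ _ _ _ hne hall); ring.
  under [X in _ - X = _]eq_bigr => l _ do rewrite hm mulrBl mul1r.
  rewrite sumrB mu1; ring.
have hmix' : forall l, mu P l + mu P3 l = mu P2 l + mu P4 l.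
  move=> l.
  have w2 : probw (fun _ : 'I_2 => (2 : R)^-1).
    split=> [i|]; first by rewrite invr_ge0.
    rewrite !big_ord_recr big_ord0 /=; lra.
  have := hnc 2%N 2%N _ (fun i : 'I_2 => if val i == 0%N then P else P3)
      _ (fun i : 'I_2 => if val i == 0%N then P2 else P4) w2 w2.
  have hs : \sum_(i < 2) (2:R)^-1 *: st T (if val i == 0%N then P else P3) =
     \sum_(i < 2) (2:R)^-1 *: st T (if val i == 0%N then P2 else P4).
    by rewrite !big_ord_recr !big_ord0 /= !add0r.
  move=> /(_ hs l); rewrite !big_ord_recr !big_ord0 /= !add0r => H.
  lra.
set pz := xi Z zp; set px := xi X xp.
have hpz : forall l, 0 <= pz l <= 1.
  move=> l; rewrite xi0 /= -(xi1 Z l) (sum2 _ _ _ _ _ zne zall) lerDl xi0 //.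
have hpx : forall l, 0 <= px l <= 1.
  move=> l; rewrite xi0 /= -(xi1 X l) (sum2 _ _ _ _ _ xne xall) lerDl xi0 //.
move: ez1 ez2 ez3 ex1 ex2 ex3.
rewrite !(expE _ _ _ zne zall) !(expE _ _ _ xne xall) -/pz -/px => ez1 ez2 ez3 ex1 ex2 ex3.
have k1 := key_bound _ _ _ _ _ _ _ _ (mu0 P) (mu0 P3) (mu0 P4) (mu0 P2) hpz hpx
  (fun l => etrans (hmix' l) (addrC _ _)) (mu1 P).
have k2 := key_bound _ _ _ _ _ _ _ _ (mu0 P2) (mu0 P4) (mu0 P3) (mu0 P) hpz hpx
  (fun l => etrans (esym (hmix' l)) (addrC _ _)) (mu1 P2).
have k3 := key_bound _ _ _ _ _ _ _ _ (mu0 P4) (mu0 P2) (mu0 P) (mu0 P3) hpz hpx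
  (fun l => etrans (addrC _ _) (esym (hmix' l))) (mu1 P4).
have k4 := key_bound _ _ _ _ _ _ _ _ (mu0 P3) (mu0 P) (mu0 P2) (mu0 P4) hpz hpx
  (fun l => etrans (addrC _ _) (hmix' l)) (mu1 P3).
set x := 2 * _ - 1; set z := 2 * _ - 1.
have [hx|hx] := lerP 0 x; have [hz|hz] := lerP 0 z;
  rewrite ?(ger0_norm hx) ?(ltr0_norm hx) ?(ger0_norm hz) ?(ltr0_norm hz) /x /z; lra.
Qed.
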